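(* Let $d>1$ and $f\ge0$ be integers, let $n=2d+f$, and let $\beta\in\mathcal S_n$ have cycle structure $d^2\cdot1^f$ (two $d$-cycles and $f$ fixed points). Then $(\varepsilon,\beta,\beta;(12))\in\mathrm{Par}(n)$ if and only if either <ul> <li>(i) $d$ is even and $f=0$, or</li> <li>(ii) $d$ is odd and $f\le d+1$.</li> </ul>
   Context: A Latin square of order $n$ is an $n\times n$ array with rows, columns and symbols indexed by $[n]$, each symbol occurring once in each row and each column, with triple set $O(L)$. Permutations act on the right; $\varepsilon$ is the identity. A paratopism $(\alpha,\beta,\gamma;(12))$ maps $L$ to $L^\sigma$ with triple set $\{(y\beta,x\alpha,z\gamma):(x,y,z)\in O(L)\}$; it is an autoparatopism of $L$ if $L^\sigma=L$. $\mathrm{Par}(n)$ is the set of paratopisms that are autoparatopisms of at least one Latin square of order $n$. *)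

(* Defs.v *)
From mathcomp Require Import all_boot all_fingroup.
Set Implicit Arguments. Unset Strict Implicit. Unset Printing Implicit Defensive.

Definition latin_square (n : nat) (L : 'I_n -> 'I_n -> 'I_n) : Prop :=
  (forall x, bijective (L x)) /\ (forall y, bijective (fun x => L x y)).

Definition triples (n : nat) (L : 'I_n -> 'I_n -> 'I_n) : {set 'I_n * 'I_n * 'I_n} :=
  [set (x, y, L x y) | x : 'I_n, y : 'I_n].

(* Image of L under the paratopism (alpha, beta, gamma; (12)), given by its triple
   set { (y beta, x alpha, z gamma) : (x,y,z) in O(L) }.  Permutations act on the
   right, so "y beta" is the image of y under beta. *)
Definition para12_triples (n : nat) (a b c : 'S_n) (L : 'I_n -> 'I_n -> 'I_n)
  : {set 'I_n * 'I_n * 'I_n} :=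
  [set (b t.1.2, a t.1.1, c t.2) | t in triples L].

Definition autoparatopism12 (n : nat) (a b c : 'S_n) (L : 'I_n -> 'I_n -> 'I_n) : Prop :=
  para12_triples a b c L = triples L.

Definition in_Par12 (n : nat) (a b c : 'S_n) : Prop :=
  exists L : 'I_n -> 'I_n -> 'I_n, latin_square L /\ autoparatopism12 a b c L.

Definition ncycles (n : nat) (s : 'S_n) (k : nat) : nat :=
  #|[set X in porbits s | #|X| == k]|.

Definition cycle_structure_d2_1f (n : nat) (s : 'S_n) (d f : nat) : Prop :=
  ncycles s d = 2 /\ ncycles s 1 = f /\
  (forall k, k != d -> k != 1%N -> ncycles s k = 0).

(* Main.v *)
Require Import Defs.
From mathcomp Require Import all_boot all_fingroup all_algebra.
From mathcomp Require Import ring zify.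
Set Implicit Arguments. Unset Strict Implicit. Unset Printing Implicit Defensive.
Import GRing.Theory.

Definition latinT (T : finType) (L : T -> T -> T) : Prop :=
  (forall x, injective (L x)) /\ (forall y, injective (fun x => L x y)).
Definition ParT (T : finType) (b : T -> T) : Prop :=
  exists L : T -> T -> T, latinT L /\ forall x y, L (b y) x = b (L x y).
Definition bT (d' : nat) (F : finType) (x : (bool * 'I_d'.+2) + F) :
   (bool * 'I_d'.+2) + F :=
  match x with inl (i, a) => inl (i, (a + 1)%R) | inr s => inr s end.

Lemma auto12P n (b : 'S_n) (L : 'I_n -> 'I_n -> 'I_n) :
  autoparatopism12 1%g b b L <-> forall x y, L (b y) x = b (L x y).
Proof.
rewrite /autoparatopism12 /para12_triples /triples; split.
- move=> H x y.
  have : (b y, (1%g : 'S_n) x, b (L x y)) \in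
     [set (b t.1.2, (1%g : 'S_n) t.1.1, b t.2) | t in [set (x0, y0, L x0 y0) | x0 : 'I_n, y0 : 'I_n]].
    apply/imsetP; exists (x, y, L x y) => //.
    by apply/imset2P; exists x y.
  rewrite H perm1 => /imset2P [u v _ _ [-> -> ->]] //.
- move=> H; apply/setP => t; apply/imsetP/imset2P.
  + case=> s /imset2P [u v _ _ ->] -> /=.
    exists (b v) u => //; by rewrite perm1 H.
  + case=> u v _ _ ->.
    exists (v, (b^-1)%g u, L v ((b^-1)%g u)).
      by apply/imset2P; exists v ((b^-1)%g u).
    by rewrite /= perm1 -H permKV.
Qed.

Lemma transfer (T : finType) (b : T -> T) n (beta : 'S_n) (phi : T -> 'I_n) :
  bijective phi -> (forall x, beta (phi x) = phi (b x)) ->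
  (in_Par12 1%g beta beta <-> ParT b).
Proof.
case=> psi K1 K2 Hc.
have Hc' : forall z, psi (beta z) = b (psi z).
  by move=> z; rewrite -{1}[z]K2 Hc K1.
split.
- case=> L [[HL1 HL2] /auto12P HR].
  exists (fun x y => psi (L (phi x) (phi y))); split; [split|].
  + move=> x y1 y2 /= E.
    have E2 := can_inj K2 E.
    by apply: (can_inj K1); apply: (bij_inj (HL1 (phi x))).
  + move=> y x1 x2 /= E.
    have E2 := can_inj K2 E.
    by apply: (can_inj K1); apply: (bij_inj (HL2 (phi y))).
  + by move=> x y; rewrite -Hc HR Hc'.
- case=> L [[HL1 HL2] HR].
  exists (fun x y => phi (L (psi x) (psi y))); split; [split|].
  + move=> x; apply: injF_bij => y1 y2 /= E.
    have E2 := can_inj K1 E.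
    by apply: (can_inj K2); apply: (HL1 (psi x)).
  + move=> y; apply: injF_bij => x1 x2 /= E.
    have E2 := can_inj K1 E.
    by apply: (can_inj K2); apply: (HL2 (psi y)).
  + apply/auto12P => x y; by rewrite Hc' HR Hc.
Qed.

Lemma iter_mod (T : Type) (g : T -> T) x d m :
  iter d g x = x -> iter (m %% d) g x = iter m g x.
Proof.
move=> H; rewrite {2}(divn_eq m d) addnC iterD; congr iter.
elim: (m %/ d) => [|q IH]; first by rewrite mul0n.
by rewrite mulSn iterD -IH H.
Qed.

Lemma porbit_fix n (s : 'S_n) x : s x = x -> porbit s x = [set x].
Proof.
move=> H; apply/setP => y; rewrite inE; apply/porbitP/eqP.
- by case=> i ->; rewrite permX_fix.
- by move=> ->; exists 0; rewrite expg0 perm1.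
Qed.

Lemma normal_form d' f n (hn : n = 2 * d'.+2 + f) (beta : 'S_n)
  (hb : cycle_structure_d2_1f beta d'.+2 f) (F : finType) (hF : #|F| = f) :
  exists phi : (bool * 'I_d'.+2) + F -> 'I_n,
    bijective phi /\ forall x, beta (phi x) = phi (bT x).
Proof.
case: hb => [h2 [h1 _]].
rewrite /ncycles in h2 h1.
have [X1 [X2 [neX HX]]] : exists X1 X2, X1 != X2 /\
    [set X in porbits beta | #|X| == d'.+2] = [set X1; X2].
  by apply/cards2P; rewrite h2.
have : X1 \in [set X in porbits beta | #|X| == d'.+2] by rewrite HX !inE eqxx.
rewrite inE => /andP [/imsetP [x1 _ E1] /eqP c1]; subst X1.
have : X2 \in [set X in porbits beta | #|X| == d'.+2] by rewrite HX !inE eqxx orbT.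
rewrite inE => /andP [/imsetP [x2 _ E2] /eqP c2]; subst X2.
clear HX h2.
pose Fx := [set x | beta x == x].
have cFx : #|Fx| = f.
  rewrite -h1.
  have -> : [set X in porbits beta | #|X| == 1%N] = porbit beta @: Fx.
    apply/setP => X; rewrite inE; apply/andP/imsetP.
    - case=> /imsetP [x _ ->] /eqP cx; exists x => //.
      rewrite inE; have := iter_porbit beta x; rewrite cx /= => ->; done.
    - case=> x; rewrite inE => /eqP fx ->; split; first by apply: imset_f.
      by rewrite porbit_fix // cards1.
  rewrite card_in_imset // => x y; rewrite !inE => /eqP fx /eqP fy.
  rewrite !porbit_fix // => /setP E; have := E x; rewrite !inE eqxx => /esym/eqP; done.
have hcast : #|F| = #|Fx| by rewrite hF cFx.
pose g (s : F) : 'I_n := enum_val (cast_ord hcast (enum_rank s)).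
have gfix : forall s, beta (g s) = g s.
  by move=> s; have := enum_valP (cast_ord hcast (enum_rank s)); rewrite inE => /eqP.
have ginj : injective g.
  move=> s t /enum_val_inj /cast_ord_inj; exact: enum_rank_inj.
pose phi (x : (bool * 'I_d'.+2) + F) : 'I_n :=
  match x with
  | inl (false, a) => iter a beta x1
  | inl (true, a) => iter a beta x2
  | inr s => g s end.
have itd1 : iter d'.+2 beta x1 = x1 by rewrite -{1}c1 iter_porbit.
have itd2 : iter d'.+2 beta x2 = x2 by rewrite -{1}c2 iter_porbit.
have po : forall x a, porbit beta (iter a beta x) = porbit beta x.
  by move=> x a; rewrite -permX porbit_perm.
have inj1 : forall x, #|porbit beta x| = d'.+2 ->
    forall a c : 'I_d'.+2, iter a beta x = iter c beta x -> a = c.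
  move=> x cx a c E; apply/val_inj => /=.
  have U := uniq_traject_porbit beta x; rewrite cx in U.
  have := @nth_uniq _ x (traject beta x d'.+2) a c; rewrite size_traject !ltn_ord.
  rewrite !nth_traject ?ltn_ord // E eqxx => /(_ isT isT U) /esym /eqP; done.
have nfix : forall x s a, #|porbit beta x| = d'.+2 -> iter a beta x <> g s.
  move=> x s a cx E; have := po x a; rewrite E porbit_fix ?gfix //.
  by move=> EE; have := congr1 (fun X : {set _} => #|X|) EE; rewrite /= cards1 cx.
have diff : forall a c, iter a beta x1 <> iter c beta x2.
  move=> a c E; case/negP: neX; apply/eqP; by rewrite -(po x1 a) E po.
exists phi; split.
- apply: inj_card_bij; last first.
    by rewrite card_sum card_prod card_bool !card_ord hF hn.
  case=> [[[] a] | s] [[[] c] | t] //= E.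
  + by rewrite (inj1 _ c2 _ _ E).
  + by case: (diff _ _ (esym E)).
  + by case: (nfix _ _ _ c2 E).
  + by case: (diff _ _ E).
  + by rewrite (inj1 _ c1 _ _ E).
  + by case: (nfix _ _ _ c1 E).
  + by case: (nfix _ _ _ c2 (esym E)).
  + by case: (nfix _ _ _ c1 (esym E)).
  + by rewrite (ginj _ _ E).
- case=> [[[] a] | s] /=; last by rewrite gfix.
  + by rewrite (@modn_small 1) // iter_mod // addn1.
  + by rewrite (@modn_small 1) // iter_mod // addn1.
Qed.

Section Iter.
Variables (T : Type) (b : T -> T) (L : T -> T -> T).
Hypothesis R : forall x y, L (b y) x = b (L x y).
Lemma it2 k x y : L (iter k b x) (iter k b y) = iter (k.*2) b (L x y).
Proof.
elim: k => [|k IH] //.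
by rewrite doubleS !iterS R R IH.
Qed.
Lemma it1 k x y : L (iter k.+1 b y) (iter k b x) = iter (k.*2.+1) b (L x y).
Proof. by rewrite iterS R it2. Qed.
End Iter.

Local Open Scope ring_scope.

Lemma iter_bT_l d' (F : finType) k i (a : 'I_d'.+2) :
  iter k (@bT d' F) (inl (i, a)) = inl (i, a + k%:R).
Proof.
elim: k => [|k IH]; first by rewrite addr0.
by rewrite iterS IH /= -addrA -natr1.
Qed.

Lemma iter_bT_r d' (F : finType) k (s : F) :
  iter k (@bT d' F) (inr s) = inr s.
Proof. by elim: k => [|k IH] //=; rewrite IH. Qed.

Lemma charZ d' : (d'.+2)%:R = 0 :> 'I_d'.+2.
Proof. exact: (@pchar_Zp d'.+2 isT). Qed.

Lemma iter_bT_d d' (F : finType) z : iter d'.+2 (@bT d' F) z = z.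
Proof.
case: z => [[i a]|s]; last by rewrite iter_bT_r.
by rewrite iter_bT_l charZ addr0.
Qed.

Lemma valZn d' k : val (k%:R : 'I_d'.+2) = (k %% d'.+2)%N.
Proof. exact: (@val_Zp_nat d'.+2 isT). Qed.

Lemma halfZ d' (a : 'I_d'.+2) : odd d'.+2 -> (a + a) * ((d'.+3)./2)%:R = a.
Proof.
move=> od.
have E : ((d'.+3)./2 + (d'.+3)./2)%N = d'.+3.
  by rewrite addnn; have := odd_double_half d'.+3; rewrite -[odd d'.+3]/(~~ odd d'.+2) od.
have -> : (a + a) * ((d'.+3)./2)%:R = a * (((d'.+3)./2 + (d'.+3)./2)%N)%:R.
  by rewrite natrD; ring.
by rewrite E -(addn1 d'.+2) natrD charZ add0r mulr1.
Qed.

Lemma noPar_even d' (F : finType) (s : F) : ~~ odd d'.+2 -> ~ ParT (@bT d' F).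
Proof.
move=> ev [L [[HL1 HL2] R]].
set t := (d'.+2)./2.
have tt : (t.*2 = d'.+2)%N.
  by have := odd_double_half d'.+2; rewrite (negbTE ev) add0n.
have := it2 R t (inr s) (inl (false, 0)).
rewrite iter_bT_r tt iter_bT_d => /HL1.
rewrite iter_bT_l => [[]].
rewrite add0n valZn modn_mod modn_small.
  by move=> t0; move: tt; rewrite t0.
have tpos : (0 < t)%N by rewrite lt0n; apply/eqP=> t0; move: tt; rewrite t0.
by rewrite -tt -addnn -[X in (X < _)%N]addn0 ltn_add2l.
Qed.

Definition iscyc0 d' (F : finType) (z : (bool * 'I_d'.+2) + F) :=
  match z with inl (false, _) => true | _ => false end.

Lemma noPar_odd d' (F : finType) : odd d'.+2 -> (d'.+3 < #|F|)%N -> ~ ParT (@bT d' F).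
Proof.
move=> od big [L [[HL1 HL2] R]].
set x0 : (bool * 'I_d'.+2) + F := inl (false, 0).
have [c K1 K2] := injF_bij (HL1 x0).
pose col (s : F) := c (inr s).
have colE : forall s, L x0 (col s) = inr s by move=> s; rewrite /col K2.
have colI : injective col by move=> s t E; have := colE s; rewrite E colE => [[]].
have notinr : forall s j, col s <> inr j.
  move=> s j E.
  have e1 : L x0 (inr j) = inr s by rewrite -E colE.
  have := it2 R 1 x0 (inr j); rewrite /= e1 /= -e1 => /(HL2 (inr j)).
  rewrite /x0 /= add0r => [[]] /eqP; rewrite oner_eq0; done.
have cyc0 : forall s a, col s = inl (false, a) -> - a - 1 = a.
  move=> s a E.
  pose k := val (- a - 1).
  have := it1 R k x0 (inl (false, a)).
  rewrite /x0 !iter_bT_l -/x0 -E colE iter_bT_r /k -natr1 natr_Zp.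
  have -> : a + (- a - 1 + 1) = 0 by ring.
  rewrite -colE E add0r => /HL1 [->]; done.
have uniq0 : forall s t a a', col s = inl (false, a) -> col t = inl (false, a') -> a = a'.
  move=> s t a a' Es Et.
  have e1 := cyc0 _ _ Es; have e2 := cyc0 _ _ Et.
  have h1 : a + a = -1 by rewrite -{1}e1; ring.
  have h2 : a' + a' = -1 by rewrite -{1}e2; ring.
  have : a + a = a' + a' by rewrite h1 h2.
  by move=> ee; rewrite -(halfZ a od) -(halfZ a' od) ee.
have key : forall s, (exists a, col s = inl (true, a)) \/ (exists a, col s = inl (false, a)).
  move=> s; case E: (col s) => [[[] a]|j].
  - by left; exists a.
  - by right; exists a.
  - by case: (notinr _ _ E).
pose B := [set inl (true, a) | a : 'I_d'.+2] : {set (bool * 'I_d'.+2) + F}.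
have cB : (#|B| <= d'.+2)%N by rewrite (leq_trans (leq_imset_card _ _)) // card_ord.
have cS : #|[set col s | s : F]| = #|F| by rewrite card_imset.
suff : exists z, [set col s | s : F] \subset z |: B.
  case=> z /subset_leq_card; rewrite cS cardsU1 => h.
  have := leq_trans h (leq_add (leq_b1 _) cB).
  by rewrite add1n leqNgt big.
case: (pickP (fun s => iscyc0 (col s))) => [s0 Hs0 | Hn].
- exists (col s0); apply/subsetP => z /imsetP [s _ ->].
  rewrite !inE; case: (key s) => [[a Ea] | [a Ea]].
    by rewrite Ea imset_f ?orbT.
  move: Hs0; case: (key s0) => [[a0 E0] | [a0 E0]]; rewrite E0 //= => _.
  by rewrite Ea (uniq0 _ _ _ _ Ea E0) eqxx.
- exists x0; apply/subsetP => z /imsetP [s _ ->].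
  rewrite !inE; case: (key s) => [[a Ea] | [a Ea]].
    by rewrite Ea imset_f ?orbT.
  by have := Hn s; rewrite /= Ea.
Qed.

Lemma col_from_row (T : finType) (b : T -> T) (L : T -> T -> T)
  (R : forall x y, L (b y) x = b (L x y)) (HL1 : forall x, injective (L x)) :
  forall y, injective (fun x => L x y).
Proof.
move=> y x1 x2 /= E; apply: (HL1 (b y)); by rewrite !R E.
Qed.

Lemma symsq (F : finType) : exists Fsq : F -> F -> F,
  (forall s t, Fsq s t = Fsq t s) /\ (forall s, injective (Fsq s)).
Proof.
pose addm (i j : 'I_#|F|) : 'I_#|F| :=
  Ordinal (ltn_pmod (i + j) (leq_ltn_trans (leq0n i) (ltn_ord i))).
exists (fun s t => enum_val (addm (enum_rank s) (enum_rank t))); split.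
- move=> s t; congr enum_val; apply/val_inj => /=; by rewrite addnC.
- move=> s t1 t2 /enum_val_inj [] /eqP.
  rewrite eqn_modDl !modn_small ?ltn_ord // => /eqP E.
  by apply: enum_rank_inj; apply/val_inj.
Qed.

Lemma dbl_inj d' (a1 a2 c : 'I_d'.+2) : odd d'.+2 ->
  c + a1 + a1 + 1 = c + a2 + a2 + 1 -> a1 = a2.
Proof.
move=> od E.
have : a1 + a1 = a2 + a2.
  by move/addIr: E; rewrite -!addrA => /addrI.
by move=> ee; rewrite -(halfZ a1 od) -(halfZ a2 od) ee.
Qed.

Lemma inlP d' (F : finType) i j (a b : 'I_d'.+2) :
  inl (i, a) = inl (j, b) :> ((bool * 'I_d'.+2) + F)%type -> i = j /\ a = b.
Proof.
move=> E; have E' := congr1 (fun z => if z is inl p then p else (i, a)) E.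
simpl in E'; split; [exact: (congr1 fst E') | exact: (congr1 snd E')].
Qed.

Definition L0 d' (x y : (bool * 'I_d'.+2) + 'I_0) : (bool * 'I_d'.+2) + 'I_0 :=
  match x, y with
  | inl (i, a), inl (j, b) => inl (i (+) j, a + b)
  | _, _ => x
  end.

Lemma C0 d' : ParT (@bT d' 'I_0).
Proof.
have no : forall s : 'I_0, False by case.
exists (@L0 d'); split; first split.
- case=> [[i a]|s]; last by case: (no s).
  case=> [[j1 b1]|s]; last by case: (no s).
  case=> [[j2 b2]|s]; last by case: (no s).
  by move=> /= /inlP [E /addrI ->]; case: i j1 j2 E => [] [] [].
- case=> [[j a]|s]; last by case: (no s).
  case=> [[i1 b1]|s]; last by case: (no s).
  case=> [[i2 b2]|s]; last by case: (no s).
  by move=> /= /inlP [E /addIr ->]; case: j i1 i2 E => [] [] [].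
- case=> [[i a]|s]; last by case: (no s).
  case=> [[j b]|s]; last by case: (no s).
  rewrite /= addbC; congr (inl (_, _)); ring.
Qed.

Section C2.
Variable d' : nat.
Hypothesis od : odd d'.+2.
Variable Fsq : option 'I_d'.+2 -> option 'I_d'.+2 -> option 'I_d'.+2.
Hypothesis Fsym : forall s t, Fsq s t = Fsq t s.
Hypothesis Finj : forall s, injective (Fsq s).
Local Notation T := ((bool * 'I_d'.+2) + option 'I_d'.+2)%type.
Definition dz : 'I_d'.+2 := ((d'.+1)./2)%:R.

Lemma dz_eq : - dz - 1 = dz.
Proof.
have E : (((d'.+1)./2 + (d'.+1)./2).+1 = d'.+2)%N.
  have e1 : odd d'.+1 = false.
    by move: od; rewrite oddS; case: (odd d'.+1).
  rewrite addnn; have := odd_double_half d'.+1.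
  by rewrite e1 => H; rewrite -[in RHS]H.
have : dz + dz + 1 = 0 by rewrite /dz -natrD natr1 E charZ.
move=> H; rewrite -[LHS]addr0 -H; ring.
Qed.

Lemma dz_neg (x : 'I_d'.+2) : (- x - 1 == dz) = (x == dz).
Proof.
apply/eqP/eqP => H.
- have -> : x = - (- x - 1) - 1 by ring.
  by rewrite H dz_eq.
- by rewrite H dz_eq.
Qed.

Definition L2 (x y : T) : T :=
  match x, y with
  | inl (false, a), inl (false, b) => if b - a == dz then inr None else inl (false, a + b)
  | inl (true, a), inl (true, b) => if b - a == dz then inr None else inl (true, a + b)
  | inl (false, a), inl (true, b) => inr (Some (b - a))
  | inl (true, a), inl (false, b) => inr (Some (a - b - 1))
  | inl (i, a), inr None => inl (i, dz + a + a)
  | inl (i, a), inr (Some s) => inl (~~ i, s + a + a)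
  | inr None, inl (i, a) => inl (i, dz + a + a + 1)
  | inr (Some s), inl (i, a) => inl (~~ i, s + a + a + 1)
  | inr u, inr v => inr (Fsq u v)
  end.

Lemma L2_rel x y : L2 (bT y) x = bT (L2 x y).
Proof.
case: x => [[[] a]|[s|]]; case: y => [[[] b]|[t|]] /=;
 try (by rewrite Fsym);
 try (by congr (inl (_, _)); ring);
 try (by congr (inr (Some _)); ring);
 try done;
 (rewrite (_ : a - (b + 1) = - (b - a) - 1); last by ring);
 rewrite dz_neg; case: eqP => _ //=; congr (inl (_, _)); ring.
Qed.

Definition g2 (x z : T) : T :=
  match x with
  | inl (i, a) =>
    match z with
    | inl (j, c) => if j == i then (if c - a - a == dz then inr None else inl (i, c - a))
                    else inr (Some (c - a - a))
    | inr None => inl (i, a + dz)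
    | inr (Some s) => if i then inl (false, a - s - 1) else inl (true, s + a)
    end
  | inr _ => z
  end.

Lemma L2_row x : injective (L2 x).
Proof.
case: x => [[i a]|u].
- apply: (can_inj (g := g2 (inl (i, a)))).
  case: i; case => [[[] b]|[t|]] /=;
   try (by congr (inl (_, _)); ring);
   try (by congr (inr (Some _)); ring);
   try (by rewrite (_ : dz + a + a - a - a = dz) ?eqxx //; ring);
   (case: eqP => [E|NE] /=; [by congr (inl (_, _)); rewrite -E; ring|]);
   (rewrite ?eqxx (_ : a + b - a - a = b - a); [|by ring]);
   by move/eqP/negbTE: NE => ->; congr (inl (_, _)); ring.
- case: u => [s|]; case => [[i1 a1]|v1]; case => [[i2 a2]|v2] //=.
  + by move=> /inlP [/negb_inj -> /(dbl_inj od) ->].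
  + by move=> [] /(Finj) ->.
  + by move=> /inlP [-> /(dbl_inj od) ->].
  + by move=> [] /(Finj) ->.
Qed.


Lemma C2 : @ParT ((bool * 'I_d'.+2) + option 'I_d'.+2)%type (@bT d' _).
Proof.
exists L2; split; first split.
- exact: L2_row.
- apply: col_from_row; [exact: L2_rel | exact: L2_row].
- exact: L2_rel.
Qed.
End C2.

Lemma card_ord_pred n (Q : pred nat) : #|[pred i : 'I_n | Q i]| = count Q (iota 0 n).
Proof.
by rewrite cardE /enum_mem size_filter -enumT -val_enum_ord count_map.
Qed.

Lemma count_int lo hi c (o : bool) n : (lo <= c < hi)%N ->
  (count (fun v => [&& lo <= v, v < hi & o || (v != c)]) (iota 0 n) +
    (if o then 0 else (c < n)) = minn n hi - minn n lo)%N.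
Proof.
move=> /andP [h1 h2].
elim: n => [|n IH]; first by case: o => //=; rewrite !min0n.
rewrite -addn1 iotaD count_cat /= add0n.
move: IH; case: o => /=.
- rewrite !addn0 => IH; rewrite IH.
  case: (leqP lo n) => a; case: (ltnP n hi) => b /=; lia.
- move=> IH.
  case: (leqP lo n) => a; case: (ltnP n hi) => b; case: (eqVneq n c) => e /=; lia.
Qed.

Lemma val_negm1 d' (x : 'I_d'.+2) : val (- x - 1) = (d'.+1 - x)%N.
Proof.
have -> : - x - 1 = ((d'.+2 - x.+1)%N)%:R.
  rewrite natrB; last exact: ltn_ord.
  by rewrite charZ -natr1 natr_Zp; ring.
by rewrite valZn subSS modn_small // ltnS leq_subr.
Qed.

Section C1.
Variables (d' f : nat).
Hypothesis od : odd d'.+2.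
Hypothesis hf : (f <= d'.+2)%N.
Definition c0 := (d'.+1)./2.
Definition hh := f./2.
Definition Pd (x : 'I_d'.+2) : bool :=
  [&& c0 - hh <= val x, val x < c0 + hh + 1 & odd f || (val x != c0)]%N.

Lemma c0E : (c0 + c0 = d'.+1)%N.
Proof.
have e1 : odd d'.+1 = false by move: od; rewrite oddS; case: (odd d'.+1).
rewrite addnn /c0; have := odd_double_half d'.+1.
by rewrite e1 => H; rewrite -[in RHS]H.
Qed.

Lemma hhE : (odd f + (hh + hh) = f)%N.
Proof. by rewrite addnn /hh odd_double_half. Qed.

Lemma Pd_cl x : Pd (- x - 1) = Pd x.
Proof.
rewrite /Pd val_negm1.
have := c0E; have := hhE; have := ltn_ord x.
case: (odd f) => /= a b c.
- apply/idP/idP => /andP [u v]; apply/andP; split; lia.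
- have le : (x <= d'.+1)%N by [].
  apply/idP/idP => /and3P [u v w]; apply/and3P; split; try lia;
    apply/eqP => E; move/eqP: w; apply; lia.
Qed.

Local Notation F := {x : 'I_d'.+2 | Pd x}.

Lemma card_F : #|{: F}| = f.
Proof.
rewrite card_sig.
have b := c0E; have a := hhE.
have H1 : (c0 - hh <= c0 < c0 + hh + 1)%N by apply/andP; split; lia.
have E1 : #|[pred x | Pd x]| =
    count (fun v => [&& c0 - hh <= v, v < c0 + hh + 1 & odd f || (v != c0)])%N (iota 0 d'.+2).
  by rewrite -card_ord_pred; apply: eq_card.
have E2 := @count_int _ _ _ (odd f) d'.+2 H1.
rewrite E1; move: E2 a.
have c0d : (c0 < d'.+2)%N by lia.
rewrite c0d; case: (odd f) => /= E2 a; lia.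
Qed.

Variable Fsq : F -> F -> F.
Hypothesis Fsym : forall s t, Fsq s t = Fsq t s.
Hypothesis Finj : forall s, injective (Fsq s).
Local Notation T := ((bool * 'I_d'.+2) + F)%type.

Definition L1 (x y : T) : T :=
  match x, y with
  | inl (false, a), inl (false, b) => inl (false, a + b)
  | inl (true, a), inl (true, b) => inl (Pd (b - a), a + b)
  | inl (false, a), inl (true, b) =>
      if (insub (b - a) : option F) is Some s then inr s else inl (true, a + b)
  | inl (true, a), inl (false, b) =>
      if (insub (a - b - 1) : option F) is Some s then inr s else inl (true, a + b)
  | inl (i, a), inr s => inl (~~ i, val s + a + a)
  | inr s, inl (i, a) => inl (~~ i, val s + a + a + 1)
  | inr s, inr t => inr (Fsq s t)
  end.

Lemma L1_rel x y : L1 (bT y) x = bT (L1 x y).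
Proof.
case: x => [[[] a]|s]; case: y => [[[] b]|t] /=.
- rewrite (_ : a - (b + 1) = - (b - a) - 1) ?Pd_cl; last by ring.
  congr (inl (_, _)); ring.
- rewrite (_ : a - (b + 1) = a - b - 1); last by ring.
  by case: insubP => //= *; congr (inl (_, _)); ring.
- congr (inl (_, _)); ring.
- rewrite (_ : b + 1 - a - 1 = b - a); last by ring.
  by case: insubP => //= *; congr (inl (_, _)); ring.
- congr (inl (_, _)); ring.
- congr (inl (_, _)); ring.
- congr (inl (_, _)); ring.
- congr (inl (_, _)); ring.
- by rewrite Fsym.
Qed.

Definition g1 (x z : T) : T :=
  match x with
  | inl (false, a) =>
    match z with
    | inl (false, c) => inl (false, c - a)
    | inl (true, c) => if (insub (c - a - a) : option F) is Some s then inr s else inl (true, c - a)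
    | inr s => inl (true, val s + a)
    end
  | inl (true, a) =>
    match z with
    | inl (false, c) => if (insub (c - a - a) : option F) is Some s then inr s else inl (true, c - a)
    | inl (true, c) => if Pd (c - a - a) then inl (true, c - a) else inl (false, c - a)
    | inr s => inl (false, a - val s - 1)
    end
  | inr _ => z
  end.

Lemma L1_row x : injective (L1 x).
Proof.
case: x => [[i a]|u].
- apply: (can_inj (g := g1 (inl (i, a)))).
  case: i; case => [[[] b]|t] /=.
  + rewrite (_ : a + b - a - a = b - a); last by ring.
    case: ifP => Pb; rewrite ?Pb.
      by congr (inl (_, _)); ring.
    by rewrite insubN ?Pb //; congr (inl (_, _)); ring.
  + case: insubP => [s Ps Es | nP] /=.
      by rewrite Es; congr (inl (_, _)); ring.
    rewrite (_ : a + b - a - a = - (a - b - 1) - 1); last by ring.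
    by rewrite Pd_cl (negbTE nP); congr (inl (_, _)); ring.
  + rewrite (_ : val t + a + a - a - a = val t); last by ring.
    by rewrite valK.
  + case: insubP => [s Ps Es | nP] /=.
      by rewrite Es; congr (inl (_, _)); ring.
    rewrite (_ : a + b - a - a = b - a); last by ring.
    by rewrite insubN //; congr (inl (_, _)); ring.
  + congr (inl (_, _)); ring.
  + rewrite (_ : val t + a + a - a - a = val t); last by ring.
    by rewrite valK.
- case => [[i1 a1]|v1]; case => [[i2 a2]|v2] //=.
  + by move=> /inlP [/negb_inj -> /(dbl_inj od) ->].
  + by move=> [] /(Finj) ->.
Qed.

Lemma C1 : @ParT T (@bT d' _).
Proof.
exists L1; split; first split.
- exact: L1_row.
- apply: col_from_row; [exact: L1_rel | exact: L1_row].
- exact: L1_rel.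
Qed.
End C1.

Local Close Scope ring_scope.

Theorem theorem4p14 (d f n : nat) (hd : 1 < d) (hn : n = 2 * d + f)
  (beta : 'S_n) (hbeta : cycle_structure_d2_1f beta d f) :
  in_Par12 1%g beta beta <->
  ((~~ odd d /\ f = 0) \/ (odd d /\ f <= d + 1)).
Proof.
case: d hd hn hbeta => [|[|d']] // _ hn hbeta.
split.
- have [phi [bij Hc]] := normal_form hn hbeta (card_ord f).
  rewrite (transfer bij Hc) => HP.
  case: (boolP (odd d'.+2)) => od.
  + right; split => //; rewrite leqNgt; apply/negP => big.
    apply: (noPar_odd od _ HP); rewrite card_ord; lia.
  + left; split => //; case: (posnP f) => [//|fpos]; exfalso.
    exact: (noPar_even (Ordinal fpos) od HP).
- case => [[ev f0]|[od hf]].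
  + subst f. have [phi [bij Hc]] := normal_form hn hbeta (card_ord 0).
    rewrite (transfer bij Hc); exact: C0.
  + case: (ltnP d'.+2 f) => big.
    * have ef : f = d'.+3 by lia.
      have cF : #|{: option 'I_d'.+2}| = f by rewrite card_option card_ord ef.
      have [Fsq [Fs Fi]] := symsq (option 'I_d'.+2).
      have [phi [bij Hc]] := normal_form hn hbeta cF.
      rewrite (transfer bij Hc); exact: (C2 od Fs Fi).
    * have cF := @card_F d' f od big.
      have [Fsq [Fs Fi]] := symsq {x : 'I_d'.+2 | Pd f x}.
      have [phi [bij Hc]] := normal_form hn hbeta cF.
      rewrite (transfer bij Hc); exact: (C1 od big Fs Fi).
Qed.
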